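(* Let $N$ be a finite-dimensional Hilbert space, let $S$ be the operator in $\ell_2(\mathbb{Z},N)$ defined below, and let $J$ be a fundamental symmetry in $\ell_2(\mathbb{Z},N)$ commuting with $S$, of the form $(J(x_k))_k=J_-x_k$ for $k\le0$ and $(J(x_k))_k=J_+x_k$ for $k\ge1$ with fundamental symmetries $J_\pm$ in $N$. Then there exist self-adjoint extensions of $S$ commuting with $J$ if and only if $\dim[(I-J_+)N]=\dim[(I-J_-)N]$.
   Context: Let $A$ be the operator in $\ell_2(\mathbb{Z},N)$ with domain consisting of all sequences $f=(f_k)_{k\in\mathbb{Z}}$ of the form $f_k=x_{k-1}-x_k$ with $(x_k)\in\ell_2(\mathbb{Z},N)$, acting by $(Af)_k=i(x_{k-1}+x_k)$; $S$ is the restriction of $A$ to those $f$ with $x_0=0$. A fundamental symmetry is a bounded $J$ with $J=J^*$, $J^2=I$. An operator $B$ commutes with $J$ if $J\mathcal{D}(B)\subset\mathcal{D}(B)$ and $JBu=BJu$ for $u\in\mathcal{D}(B)$. *)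

(* Defs.v *)
From HB Require Import structures.
From mathcomp Require Import all_boot all_order all_algebra.
From mathcomp Require Import all_classical all_reals all_analysis.
From mathcomp Require Import complex.
Import numFieldNormedType.Exports.
Set Implicit Arguments. Unset Strict Implicit. Unset Printing Implicit Defensive.
Import Order.TTheory GRing.Theory Num.Theory.
Local Open Scope ring_scope.

Section Defs.
Variables (R : realType) (n : nat).
Local Notation C := (complex R).

(* N = C^n (column vectors), standard inner product *)
Definition vdot (u v : 'cV[C]_n) : C := \sum_(i < n) u i 0 * conjc (v i 0).
Definition vsqn (u : 'cV[C]_n) : R := \sum_(i < n) (complex.Re (u i 0) ^+ 2 + complex.Im (u i 0) ^+ 2).

Definition zseq := int -> 'cV[C]_n.

(* symmetric partial sums over k in [-m, m] *)
Definition zpsum (T : nmodType) (F : int -> T) (m : nat) : T :=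
  \sum_(j < (2 * m).+1) F (j%:Z - m%:Z).

Definition l2 (x : zseq) : Prop :=
  exists M : R, forall m : nat, zpsum (fun k => vsqn (x k)) m <= M.

Definition ip (x y : zseq) : C :=
  Complex (limn (fun m : nat => (complex.Re (zpsum (fun k => vdot (x k) (y k)) m) : R)))
          (limn (fun m : nat => (complex.Im (zpsum (fun k => vdot (x k) (y k)) m) : R))).

Record op := Op { dom : zseq -> Prop; act : zseq -> zseq }.

Definition is_op_in_l2 (B : op) : Prop :=
  forall f, dom B f -> l2 f /\ l2 (act B f).

Definition adj_graph (B : op) (g h : zseq) : Prop :=
  l2 g /\ l2 h /\ forall f, dom B f -> ip (act B f) g = ip f h.

Definition selfadjoint (B : op) : Prop :=
  is_op_in_l2 B /\ forall g h, adj_graph B g h <-> (dom B g /\ act B g = h).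

Definition S_graph (f g : zseq) : Prop :=
  exists x : zseq, l2 x /\ x 0 = 0 /\
    f = (fun k => x (k - 1) - x k) /\
    g = (fun k => (Complex 0 1) *: (x (k - 1) + x k)).

Definition extends_S (B : op) : Prop :=
  forall f g, S_graph f g -> dom B f /\ act B f = g.

Definition fund_sym (J : 'M[C]_n) : Prop :=
  (map_mx (@conjc R) J)^T = J /\ J *m J = 1%:M.

Definition Jop (Jm Jp : 'M[C]_n) (x : zseq) : zseq :=
  fun k => if (k <= 0)%R then Jm *m x k else Jp *m x k.

Definition J_commutes_S (Jm Jp : 'M[C]_n) : Prop :=
  forall f g, S_graph f g -> S_graph (Jop Jm Jp f) (Jop Jm Jp g).

Definition J_commutes (Jm Jp : 'M[C]_n) (B : op) : Prop :=
  forall u, dom B u -> dom B (Jop Jm Jp u) /\ Jop Jm Jp (act B u) = act B (Jop Jm Jp u).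

End Defs.

(* Main.v *)
Require Import Defs.
From HB Require Import structures.
From mathcomp Require Import all_boot all_order all_algebra.
From mathcomp Require Import all_classical all_reals all_analysis.
From mathcomp Require Import complex.
From mathcomp Require Import ring lra zify.
From Stdlib Require Import Classical ClassicalEpsilon.
Import Order.TTheory GRing.Theory Num.Theory.
Import numFieldNormedType.Exports.
Set Implicit Arguments. Unset Strict Implicit. Unset Printing Implicit Defensive.
Local Open Scope ring_scope.

Section P1.
Variable R : realType.
Local Notation C := (R[i]).

Lemma ReD (a b : C) : complex.Re (a + b) = complex.Re a + complex.Re b.
Proof. by case: a; case: b. Qed.
Lemma ImD (a b : C) : complex.Im (a + b) = complex.Im a + complex.Im b.
Proof. by case: a; case: b. Qed.
Lemma Re0 : complex.Re (0 : C) = 0. Proof. by []. Qed.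
Lemma Im0 : complex.Im (0 : C) = 0. Proof. by []. Qed.
Lemma ReN (a : C) : complex.Re (- a) = - complex.Re a. Proof. by case: a. Qed.
Lemma ImN (a : C) : complex.Im (- a) = - complex.Im a. Proof. by case: a. Qed.
Lemma ReB (a b : C) : complex.Re (a - b) = complex.Re a - complex.Re b.
Proof. by rewrite ReD ReN. Qed.
Lemma ImB (a b : C) : complex.Im (a - b) = complex.Im a - complex.Im b.
Proof. by rewrite ImD ImN. Qed.

Lemma Re_sum (I : Type) (r : seq I) (P : pred I) (F : I -> C) :
  complex.Re (\sum_(i <- r | P i) F i) = \sum_(i <- r | P i) complex.Re (F i).
Proof. exact: (big_morph _ ReD Re0). Qed.
Lemma Im_sum (I : Type) (r : seq I) (P : pred I) (F : I -> C) :
  complex.Im (\sum_(i <- r | P i) F i) = \sum_(i <- r | P i) complex.Im (F i).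
Proof. exact: (big_morph _ ImD Im0). Qed.

Lemma C_ext (a b : C) : complex.Re a = complex.Re b -> complex.Im a = complex.Im b -> a = b.
Proof. by case: a => ? ?; case: b => ? ? /= -> ->. Qed.

End P1.

Section Zp.
Variable T : nmodType.

Lemma zpsum0 (F : int -> T) : zpsum F 0 = F 0.
Proof. by rewrite /zpsum big_ord1. Qed.

Lemma zpsumS (F : int -> T) m :
  zpsum F m.+1 = zpsum F m + F (- (m.+1)%:Z) + F (m.+1)%:Z.
Proof.
rewrite /zpsum.
have -> : (2 * m.+1).+1 = ((2 * m).+1).+1.+1 by rewrite mulnS.
rewrite big_ord_recl big_ord_recr /=.
rewrite addrA [F _ + _]addrC; congr (_ + _ + _).
- apply: eq_bigr => i _; congr F.
  rewrite /bump /= add1n !intS; lia.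
- congr F; lia.
- congr F; rewrite /bump /=; lia.
Qed.

Lemma zpsumD (F G : int -> T) m : zpsum (fun k => F k + G k) m = zpsum F m + zpsum G m.
Proof. by rewrite /zpsum big_split. Qed.

Lemma zpsum_eq (F G : int -> T) m : (forall k, F k = G k) -> zpsum F m = zpsum G m.
Proof. by move=> e; rewrite /zpsum; apply: eq_bigr => i _; rewrite e. Qed.

Lemma zpsum_delta (a : int) (c : T) m : (`|a| <= m)%N ->
  zpsum (fun k => if k == a then c else 0) m = c.
Proof.
move=> ha; rewrite /zpsum.
have hi : (absz (a + m%:Z)%R < (2 * m).+1)%N by lia.
rewrite (bigD1 (Ordinal hi)) //= big1 ?addr0.
  have -> : ((absz (a + m%:Z)%R)%:Z - m%:Z == a) = true by apply/eqP; lia.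
  by [].
move=> i hneq; case: ifP => // /eqP hE; exfalso; move/eqP: hneq; apply.
apply: val_inj => /=; lia.
Qed.

End Zp.

Section P2.
Local Open Scope classical_set_scope.
Variable R : realType.

Lemma zpsum_mulr (c : R) (F : int -> R) m : zpsum (fun k => c * F k) m = c * zpsum F m.
Proof. by rewrite /zpsum mulr_sumr. Qed.

Lemma zpsum_ge0 (c : int -> R) m : (forall k, 0 <= c k) -> 0 <= zpsum c m.
Proof. by move=> h; rewrite /zpsum; apply: sumr_ge0 => i _. Qed.

Lemma zpsum_nondecr (c : int -> R) : (forall k, 0 <= c k) ->
  {homo (zpsum c) : p q / (p <= q)%N >-> p <= q}.
Proof.
move=> h; apply/nondecreasing_seqP => m; rewrite zpsumS -addrA lerDl.
by apply: addr_ge0.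
Qed.

Lemma zpsum_cvg_nonneg (c : int -> R) M : (forall k, 0 <= c k) ->
  (forall m, zpsum c m <= M) -> cvgn (zpsum c).
Proof.
move=> h hM; apply: nondecreasing_is_cvgn; first exact: zpsum_nondecr.
by exists M => _ [m _ <-].
Qed.

Lemma zpsum_cvg_dom (t b : int -> R) M : (forall k, `|t k| <= b k) ->
  (forall m, zpsum b m <= M) -> cvgn (zpsum t).
Proof.
move=> htb hM.
have b0 k : 0 <= b k by apply: le_trans (htb k).
have e : zpsum t = (fun m => zpsum (fun k => b k + t k) m - zpsum b m).
  by apply: funext => m; rewrite zpsumD addrAC subrr add0r.
rewrite e; apply: is_cvgB.
  apply: (@zpsum_cvg_nonneg _ (M + M)).
    by move=> k; rewrite -lerBlDl sub0r; have := htb k; rewrite ler_norml => /andP[].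
  by move=> m; rewrite zpsumD; apply: lerD => //; apply: le_trans (hM m);
     rewrite /zpsum; apply: ler_sum => i _; have := htb (i%:Z - m%:Z);
     rewrite ler_norml => /andP[].
by apply: (@zpsum_cvg_nonneg _ M).
Qed.

Lemma limn_shift_cst (u : nat -> R) K c : (forall m, (K <= m)%N -> u m = c) ->
  (u @ \oo --> c).
Proof.
move=> h; rewrite -(cvg_shiftn K).
have -> : [sequence u (n0 + K)%N]_n0 = fun=> c.
  by apply: funext => m /=; rewrite h // leq_addl.
exact: cvg_cst.
Qed.

Lemma zpsum_tail (c : int -> R) M : (forall k, 0 <= c k) ->
  (forall m, zpsum c m <= M) ->
  ((fun m : nat => c m%:Z) @ \oo --> 0) /\ ((fun m : nat => c (- m%:Z)) @ \oo --> 0).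
Proof.
move=> h hM.
have cv := zpsum_cvg_nonneg h hM.
have d : (fun m => zpsum c m.+1 - zpsum c m) @ \oo --> 0.
  have -> : 0 = limn (zpsum c) - limn (zpsum c) by rewrite subrr.
  apply: cvgB; last exact: cv.
  by rewrite (cvg_shiftS (zpsum c)).
have bnd m : 0 <= c m.+1%:Z <= zpsum c m.+1 - zpsum c m /\
             0 <= c (- m.+1%:Z) <= zpsum c m.+1 - zpsum c m.
  rewrite zpsumS.
  have -> : forall x y, zpsum c m + x + y - zpsum c m = x + y by move=> x y; ring.
  split; apply/andP; split => //;
  by [rewrite lerDr | rewrite lerDl].
split; rewrite -cvg_shiftS /=.
  apply: (@squeeze_cvgr _ _ _ _ (fun=> 0) (fun m => zpsum c m.+1 - zpsum c m)) => //.
    by near=> m; have [] := bnd m.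
  exact: cvg_cst.
apply: (@squeeze_cvgr _ _ _ _ (fun=> 0) (fun m => zpsum c m.+1 - zpsum c m)) => //.
  by near=> m; have [] := bnd m.
exact: cvg_cst.
Unshelve. all: by end_near.
Qed.

End P2.

Section P3.
Local Open Scope classical_set_scope.
Variables (R : realType) (n : nat).
Local Notation C := (R[i]).
Local Notation V := ('cV[C]_n).

Definition nsq (c : C) : R := complex.Re c ^+ 2 + complex.Im c ^+ 2.

Lemma nsq_ge0 c : 0 <= nsq c.
Proof. by rewrite /nsq addr_ge0 // sqr_ge0. Qed.

Lemma vsqn_ge0 (u : V) : 0 <= vsqn u.
Proof. by rewrite /vsqn; apply: sumr_ge0 => i _; apply: (nsq_ge0 (u i 0)). Qed.

Lemma vdotDl (u1 u2 v : V) : vdot (u1 + u2) v = vdot u1 v + vdot u2 v.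
Proof. by rewrite /vdot -big_split; apply: eq_bigr => i _; rewrite mxE mulrDl. Qed.
Lemma vdotDr (u v1 v2 : V) : vdot u (v1 + v2) = vdot u v1 + vdot u v2.
Proof. by rewrite /vdot -big_split; apply: eq_bigr => i _; rewrite mxE rmorphD mulrDr. Qed.
Lemma vdotZl (a : C) (u v : V) : vdot (a *: u) v = a * vdot u v.
Proof. by rewrite /vdot mulr_sumr; apply: eq_bigr => i _; rewrite mxE mulrA. Qed.
Lemma vdotZr (a : C) (u v : V) : vdot u (a *: v) = conjc a * vdot u v.
Proof.
by rewrite /vdot mulr_sumr; apply: eq_bigr => i _; rewrite mxE rmorphM mulrCA.
Qed.
Lemma vdotNl (u v : V) : vdot (- u) v = - vdot u v.
Proof. by rewrite -scaleN1r vdotZl mulN1r. Qed.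
Lemma vdotNr (u v : V) : vdot u (- v) = - vdot u v.
Proof. by rewrite -scaleN1r vdotZr rmorphN1 mulN1r. Qed.
Lemma vdotBl (u1 u2 v : V) : vdot (u1 - u2) v = vdot u1 v - vdot u2 v.
Proof. by rewrite vdotDl vdotNl. Qed.
Lemma vdotBr (u v1 v2 : V) : vdot u (v1 - v2) = vdot u v1 - vdot u v2.
Proof. by rewrite vdotDr vdotNr. Qed.
Lemma vdot0l (v : V) : vdot 0 v = 0.
Proof. by rewrite /vdot big1 // => i _; rewrite mxE mul0r. Qed.
Lemma vdot0r (v : V) : vdot v 0 = 0.
Proof. by rewrite /vdot big1 // => i _; rewrite mxE rmorph0 mulr0. Qed.

Lemma vdot_mx (u v : V) : vdot u v = ((map_mx conjc v)^T *m u) 0 0.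
Proof. by rewrite /vdot mxE; apply: eq_bigr => i _; rewrite !mxE mulrC. Qed.

Lemma vdot_self (u : V) : vdot u u = ((vsqn u)%:C)%C.
Proof.
rewrite /vdot /vsqn; apply: C_ext.
  by rewrite Re_sum /=; apply: eq_bigr => i _; case: (u i 0) => a b /=; ring.
by rewrite Im_sum /= big1 // => i _; case: (u i 0) => a b /=; ring.
Qed.

Lemma vdot_bound (u v : V) :
  `|complex.Re (vdot u v)| <= (vsqn u + vsqn v) / 2 /\
  `|complex.Im (vdot u v)| <= (vsqn u + vsqn v) / 2.
Proof.
rewrite /vdot /vsqn Re_sum Im_sum -big_split /= mulr_suml.
split; (apply: le_trans (ler_norm_sum _ _ _) _; apply: ler_sum => i _);
case: (u i 0) => a b; case: (v i 0) => c d /=; rewrite ler_norml;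
have h1 := sqr_ge0 (a + c); have h2 := sqr_ge0 (b + d);
have h3 := sqr_ge0 (a - c); have h4 := sqr_ge0 (b - d);
have h5 := sqr_ge0 (a + d); have h6 := sqr_ge0 (b + c);
have h7 := sqr_ge0 (a - d); have h8 := sqr_ge0 (b - c);
apply/andP; split; nra.
Qed.

Lemma nsq_lin (a b x y : C) :
  nsq (a * x + b * y) <= 2 * (nsq a * nsq x + nsq b * nsq y).
Proof.
case: a => a1 a2; case: b => b1 b2; case: x => x1 x2; case: y => y1 y2.
rewrite /nsq /=.
set p1 := a1 * x1 - a2 * x2; set p2 := a1 * x2 + a2 * x1.
set q1 := b1 * y1 - b2 * y2; set q2 := b1 * y2 + b2 * y1.
have -> : 2 * ((a1 ^+ 2 + a2 ^+ 2) * (x1 ^+ 2 + x2 ^+ 2) +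
               (b1 ^+ 2 + b2 ^+ 2) * (y1 ^+ 2 + y2 ^+ 2)) =
          2 * (p1 ^+ 2 + p2 ^+ 2 + q1 ^+ 2 + q2 ^+ 2) by rewrite /p1 /p2 /q1 /q2; ring.
clearbody p1 p2 q1 q2; have h1 := sqr_ge0 (p1 - q1); have h2 := sqr_ge0 (p2 - q2); nra.
Qed.

Lemma vsqn_lin (a b : C) (x y : V) :
  vsqn (a *: x + b *: y) <= 2 * (nsq a * vsqn x + nsq b * vsqn y).
Proof.
rewrite /vsqn !mulr_sumr -big_split mulr_sumr; apply: ler_sum => i _.
rewrite !mxE; exact: (nsq_lin a b (x i 0) (y i 0)).
Qed.

Lemma l2_bound (x : zseq R n) : l2 x -> exists M, forall m, zpsum (fun k => vsqn (x k)) m <= M.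
Proof. by []. Qed.

Lemma l2_lin (a b : C) (x y : zseq R n) : l2 x -> l2 y ->
  l2 (fun k => a *: x k + b *: y k).
Proof.
move=> [Mx hx] [My hy]; exists (2 * (nsq a * Mx + nsq b * My)) => m.
apply: (@le_trans _ _ (zpsum (fun k => 2 * (nsq a * vsqn (x k) + nsq b * vsqn (y k))) m)).
  by rewrite /zpsum; apply: ler_sum => i _; apply: vsqn_lin.
rewrite zpsum_mulr zpsumD (zpsum_mulr (nsq a)) (zpsum_mulr (nsq b)).
rewrite ler_pM2l //; apply: lerD; apply: ler_wpM2l => //; apply: nsq_ge0.
Qed.

Lemma zpsum_fin (T : nmodType) (F : int -> T) K : (forall k, (K < `|k|)%N -> F k = 0) ->
  forall m, (K <= m)%N -> zpsum F m = zpsum F K.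
Proof.
move=> h; elim=> [|m IH]; first by rewrite leqn0 => /eqP ->.
rewrite leq_eqVlt => /orP[/eqP -> //|]; rewrite ltnS => hKm.
rewrite zpsumS IH // !h ?addr0 //; lia.
Qed.

Lemma l2_fin (x : zseq R n) K : (forall k, (K < `|k|)%N -> x k = 0) -> l2 x.
Proof.
move=> h; exists (zpsum (fun k => vsqn (x k)) K) => m.
have [hm|hm] := leqP m K.
  by apply: zpsum_nondecr => // k; apply: vsqn_ge0.
rewrite (@zpsum_fin _ _ K) //; last by apply: ltnW.
move=> k hk; rewrite h // /vsqn big1 // => i _; rewrite mxE /=; ring.
Qed.

Definition psR (x y : zseq R n) m := complex.Re (zpsum (fun k => vdot (x k) (y k)) m).
Definition psI (x y : zseq R n) m := complex.Im (zpsum (fun k => vdot (x k) (y k)) m).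

Lemma ipE x y : ip x y = Complex (limn (psR x y)) (limn (psI x y)).
Proof. by []. Qed.

Lemma ip_cvg (x y : zseq R n) : l2 x -> l2 y -> cvgn (psR x y) /\ cvgn (psI x y).
Proof.
move=> [Mx hx] [My hy].
have hb m : zpsum (fun k => (vsqn (x k) + vsqn (y k)) / 2) m <= (Mx + My) / 2.
  rewrite (@zpsum_eq _ _ (fun k => 2^-1 * (vsqn (x k) + vsqn (y k)))); last by move=> k; rewrite mulrC.
  rewrite zpsum_mulr zpsumD mulrC ler_pM2r ?invr_gt0 //; exact: lerD.
have eR : psR x y = zpsum (fun k => complex.Re (vdot (x k) (y k))).
  by apply: funext => m; rewrite /psR /zpsum Re_sum.
have eI : psI x y = zpsum (fun k => complex.Im (vdot (x k) (y k))).
  by apply: funext => m; rewrite /psI /zpsum Im_sum.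
rewrite eR eI; split; apply: (zpsum_cvg_dom _ hb) => k; have [] := vdot_bound (x k) (y k) => //.
Qed.

Lemma ip_fin (x y : zseq R n) K : (forall k, (K < `|k|)%N -> vdot (x k) (y k) = 0) ->
  ip x y = zpsum (fun k => vdot (x k) (y k)) K.
Proof.
move=> h; have e := zpsum_fin h; rewrite ipE; apply: C_ext => /=.
  apply: cvg_lim => //; apply: (@limn_shift_cst _ _ K) => m hm; rewrite /psR e //.
apply: cvg_lim => //; apply: (@limn_shift_cst _ _ K) => m hm; rewrite /psI e //.
Qed.

End P3.

Section P4.
Local Open Scope classical_set_scope.
Variables (R : realType) (n : nat).
Local Notation C := (R[i]).
Local Notation V := ('cV[C]_n).
Local Notation Z := (zseq R n).

Lemma conj_i : conjc ('i : C) = - 'i.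
Proof. by apply: C_ext; rewrite ?ReN ?ImN /= ?oppr0. Qed.

Definition zz (f g : Z) : Z := fun k => (2 * 'i)^-1 *: (g k + 'i *: f k).
Definition ww (f g : Z) : Z := fun k => (2 * 'i)^-1 *: (g k - 'i *: f k).

Lemma two_i_neq0 : (2 * 'i : C) != 0.
Proof. by rewrite mulf_neq0 ?neq0Ci // pnatr_eq0. Qed.

Lemma hh (T : zmodType) (a b : T) : a + b - (a - b) = b + b.
Proof. by rewrite opprB addrC addrA addrNK addrC. Qed.

Lemma f_zw (f g : Z) k : f k = zz f g k - ww f g k.
Proof.
rewrite /zz /ww -scalerBr.
have -> : g k + 'i *: f k - (g k - 'i *: f k) = (2 * 'i) *: f k.
  by rewrite hh mulrDl mul1r scalerDl.
by rewrite scalerA mulVf ?scale1r // two_i_neq0.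
Qed.

Lemma g_zw (f g : Z) k : g k = 'i *: (zz f g k + ww f g k).
Proof.
rewrite /zz /ww -scalerDr.
have -> : g k + 'i *: f k + (g k - 'i *: f k) = 2 *: g k.
  by rewrite addrACA subrr addr0 scalerDl scale1r.
rewrite !scalerA.
have -> : 'i * ((2 * 'i)^-1 * 2) = 1 :> C.
  by field; exact: neq0Ci.
by rewrite scale1r.
Qed.

Lemma vdot_ident (z w z' w' : V) :
  vdot ('i *: (z + w)) (z' - w') - vdot (z - w) ('i *: (z' + w')) =
  2 * 'i * (vdot z z' - vdot w w').
Proof.
rewrite vdotZl vdotZr conj_i !(vdotDl, vdotNl, vdotDr, vdotNr); ring.
Qed.

Lemma vdot_pair (f g f' g' : Z) k :
  vdot (g k) (f' k) - vdot (f k) (g' k) =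
  2 * 'i * (vdot (zz f g k) (zz f' g' k) - vdot (ww f g k) (ww f' g' k)).
Proof. by rewrite (g_zw f g) (f_zw f' g') (f_zw f g) (g_zw f' g') vdot_ident. Qed.

Definition rel (f g : Z) := forall k : int, k != 0 -> ww f g k = zz f g (k + 1).

Lemma telescope (z w z' w' : Z) :
  (forall k : int, k != 0 -> w k = z (k + 1)) ->
  (forall k : int, k != 0 -> w' k = z' (k + 1)) ->
  forall m, (1 <= m)%N ->
  zpsum (fun k => vdot (z k) (z' k) - vdot (w k) (w' k)) m =
  vdot (z (- m%:Z)) (z' (- m%:Z)) + vdot (z 1) (z' 1) - vdot (w 0) (w' 0)
  - vdot (w m%:Z) (w' m%:Z).
Proof.
move=> hw hw'; elim=> [//|m IH] _.
case: m IH => [_|m IH].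
  rewrite zpsumS zpsum0 /=.
  rewrite (hw (-1)) // (hw' (-1)) // (hw 1) // (hw' 1) //.
  have -> : (-1 + 1 : int) = 0 by [].
  have -> : (- (1%:Z) : int) = -1 by [].
  have -> : (1 + 1 : int) = 2 by [].
  ring.
rewrite zpsumS IH //.
rewrite (hw (- m.+2%:Z)); last by rewrite oppr_eq0.
rewrite (hw' (- m.+2%:Z)); last by rewrite oppr_eq0.
rewrite (hw m.+1%:Z) // (hw' m.+1%:Z) //.
have -> : (- m.+2%:Z + 1 : int) = - m.+1%:Z by lia.
have -> : (m.+1%:Z + 1 : int) = m.+2%:Z by lia.
ring.
Qed.

Lemma squeeze_abs (u b : nat -> R) : (forall m, `|u m| <= b m) ->
  b @ \oo --> 0 -> u @ \oo --> 0.
Proof.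
move=> h hb; apply: (@squeeze_cvgr _ _ _ _ (fun m => - b m) b)  => //.
- by near=> m; rewrite -ler_norml; exact: h.
- have H := cvgN hb; rewrite oppr0 in H; exact: H.
Unshelve. all: by end_near.
Qed.

Lemma vdot_tail (p q : Z) : l2 p -> l2 q ->
  ((fun m : nat => complex.Re (vdot (p m%:Z) (q m%:Z))) @ \oo --> 0) /\
  ((fun m : nat => complex.Im (vdot (p m%:Z) (q m%:Z))) @ \oo --> 0) /\
  ((fun m : nat => complex.Re (vdot (p (- m%:Z)) (q (- m%:Z)))) @ \oo --> 0) /\
  ((fun m : nat => complex.Im (vdot (p (- m%:Z)) (q (- m%:Z)))) @ \oo --> 0).
Proof.
move=> [Mp hp] [Mq hq].
have [tp1 tp2] := zpsum_tail (fun k => vsqn_ge0 (p k)) hp.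
have [tq1 tq2] := zpsum_tail (fun k => vsqn_ge0 (q k)) hq.
have b1 : (fun m : nat => (vsqn (p m%:Z) + vsqn (q m%:Z)) / 2) @ \oo --> 0.
  rewrite -[0 : R](mul0r (2^-1)) -[0 : R](addr0 0).
  exact: cvgMl (cvgD tp1 tq1).
have b2 : (fun m : nat => (vsqn (p (- m%:Z)) + vsqn (q (- m%:Z))) / 2) @ \oo --> 0.
  rewrite -[0 : R](mul0r (2^-1)) -[0 : R](addr0 0).
  exact: cvgMl (cvgD tp2 tq2).
split; [|split; [|split]].
- by apply: (squeeze_abs _ b1) => m; exact: (vdot_bound _ _).1.
- by apply: (squeeze_abs _ b1) => m; exact: (vdot_bound _ _).2.
- by apply: (squeeze_abs _ b2) => m; exact: (vdot_bound _ _).1.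
- by apply: (squeeze_abs _ b2) => m; exact: (vdot_bound _ _).2.
Qed.

End P4.

Section P5.
Local Open Scope classical_set_scope.
Variables (R : realType) (n : nat).
Local Notation C := (R[i]).
Local Notation V := ('cV[C]_n).
Local Notation Z := (zseq R n).

Lemma l2_zz (f g : Z) : l2 f -> l2 g -> l2 (zz f g).
Proof.
move=> lf lg; have -> : zz f g = fun k => (2 * 'i)^-1 *: g k + ((2 * 'i)^-1 * 'i) *: f k.
  by apply: funext => k; rewrite /zz scalerDr scalerA.
exact: l2_lin.
Qed.

Lemma l2_ww (f g : Z) : l2 f -> l2 g -> l2 (ww f g).
Proof.
move=> lf lg; have -> : ww f g = fun k => (2 * 'i)^-1 *: g k + (- ((2 * 'i)^-1 * 'i)) *: f k.
  by apply: funext => k; rewrite /ww scalerDr scalerN scalerA scaleNr.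
exact: l2_lin.
Qed.

Lemma Re2i (x : C) : complex.Re (2 * 'i * x) = - (2 * complex.Im x).
Proof. by case: x => a b /=; ring. Qed.
Lemma Im2i (x : C) : complex.Im (2 * 'i * x) = 2 * complex.Re x.
Proof. by case: x => a b /=; ring. Qed.

Lemma zpsumB (T : zmodType) (F G : int -> T) m :
  zpsum (fun k => F k - G k) m = zpsum F m - zpsum G m.
Proof. by rewrite /zpsum sumrB. Qed.

Lemma zpsum_mulC (c : C) (F : int -> C) m : zpsum (fun k => c * F k) m = c * zpsum F m.
Proof. by rewrite /zpsum mulr_sumr. Qed.

Lemma ReC (a b : R) : complex.Re (Complex a b) = a. Proof. by []. Qed.
Lemma ImC (a b : R) : complex.Im (Complex a b) = b. Proof. by []. Qed.
Lemma cvg_ext (u v : nat -> R) (l : R) : (forall m, u m = v m) -> v @ \oo --> l -> u @ \oo --> l.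
Proof. by move=> h; have -> : u = v := funext h. Qed.

Lemma cvgB0 (u v : nat -> R) : u @ \oo --> (0:R) -> v @ \oo --> (0:R) ->
  (fun m => u m - v m) @ \oo --> (0:R).
Proof. by move=> hu hv; rewrite -[0:R]subr0; apply: cvgB. Qed.
Lemma shift0 (u : nat -> R) (l : R) : u @ \oo --> l -> (fun m => u m.+1) @ \oo --> l.
Proof. by rewrite -(cvg_shiftS u). Qed.

Lemma fBE (u v : nat -> R) m : (u - v) m = u m - v m. Proof. by []. Qed.

Lemma lim_diff (u v : nat -> R) (l k : R) (e : nat -> R) : cvgn u -> cvgn v ->
  (forall m, u m.+1 - v m.+1 = l + k * e m) -> e @ \oo --> (0:R) -> limn u - limn v = l.
Proof.
move=> cu cv h he; rewrite -limB //; apply: cvg_lim => //.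
rewrite -cvg_shiftS.
have -> : [sequence (u - v) n.+1]_n = fun m => l + k * e m.
  by apply: funext => m /=; rewrite -h.
have H : (fun m => l + k * e m) @ \oo --> l + k * 0.
  by apply: cvgD; [exact: cvg_cst | exact: cvgMr].
by rewrite mulr0 addr0 in H.
Qed.

Lemma lemA (a b c d : C) : a + b - c - d = b - c + (a - d).
Proof. ring. Qed.

Lemma ip_tele (f g f' g' : Z) : l2 f -> l2 g -> l2 f' -> l2 g' ->
  rel f g -> rel f' g' ->
  ip g f' - ip f g' =
  2 * 'i * (vdot (zz f g 1) (zz f' g' 1) - vdot (ww f g 0) (ww f' g' 0)).
Proof.
move=> lf lg lf' lg' r r'.
set z := zz f g; set w := ww f g; set z' := zz f' g'; set w' := ww f' g'.
set c := vdot (z 1) (z' 1) - vdot (w 0) (w' 0).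
have key m : (1 <= m)%N ->
  zpsum (fun k => vdot (g k) (f' k)) m - zpsum (fun k => vdot (f k) (g' k)) m =
  2 * 'i * (c + (vdot (z (- m%:Z)) (z' (- m%:Z)) - vdot (w m%:Z) (w' m%:Z))).
  move=> hm; rewrite -zpsumB (zpsum_eq _ (vdot_pair f g f' g')) zpsum_mulC.
  rewrite (telescope r r' hm) /c; congr (_ * _); exact: lemA.
have [t1 [t2 [t3 t4]]] := vdot_tail (l2_ww lf lg) (l2_ww lf' lg').
have [s1 [s2 [s3 s4]]] := vdot_tail (l2_zz lf lg) (l2_zz lf' lg').
have [cR1 cI1] := ip_cvg lg lf'; have [cR2 cI2] := ip_cvg lf lg'.
have ER : (fun m : nat => complex.Im (vdot (z (- m.+1%:Z)) (z' (- m.+1%:Z))) -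
                        complex.Im (vdot (w m.+1%:Z) (w' m.+1%:Z))) @ \oo --> (0:R).
  exact: (cvgB0 (shift0 s4) (shift0 t2)).
have EI : (fun m : nat => complex.Re (vdot (z (- m.+1%:Z)) (z' (- m.+1%:Z))) -
                        complex.Re (vdot (w m.+1%:Z) (w' m.+1%:Z))) @ \oo --> (0:R).
  exact: (cvgB0 (shift0 s3) (shift0 t1)).
apply: C_ext.
- rewrite ReB !ipE !ReC; apply: (lim_diff cR1 cR2 (k := -2) _ ER) => m.
  rewrite /psR -ReB key // mulrDr ReD; congr (_ + _).
  by rewrite Re2i ImB mulNr.
- rewrite ImB !ipE !ImC; apply: (lim_diff cI1 cI2 (k := 2) _ EI) => m.
  rewrite /psI -ImB key // mulrDr ImD; congr (_ + _).
  by rewrite Im2i ReB.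
Qed.
End P5.

Section P6.
Local Open Scope classical_set_scope.
Variables (R : realType) (n : nat).
Local Notation C := (R[i]).
Local Notation V := ('cV[C]_n).
Local Notation Z := (zseq R n).

Definition pf (z w : Z) : Z := fun k => z k - w k.
Definition pg (z w : Z) : Z := fun k => 'i *: (z k + w k).
Definition dl (a : int) (c : V) : Z := fun k => if k == a then c else 0.

Lemma zz_pfpg (z w : Z) : zz (pf z w) (pg z w) = z.
Proof.
apply: funext => k; rewrite /zz /pf /pg -scalerDr.
have -> : z k + w k + (z k - w k) = (1 + 1) *: z k by rewrite addrACA subrr addr0 scalerDl scale1r.
rewrite !scalerA.
have -> : (2 * 'i)^-1 * ('i * (1 + 1)) = 1 :> C by field; exact: neq0Ci.
by rewrite scale1r.
Qed.

Lemma ww_pfpg (z w : Z) : ww (pf z w) (pg z w) = w.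
Proof.
apply: funext => k; rewrite /ww /pf /pg -scalerBr.
have -> : z k + w k - (z k - w k) = (1 + 1) *: w k by rewrite hh scalerDl scale1r.
rewrite !scalerA.
have -> : (2 * 'i)^-1 * 'i * (1 + 1) = 1 :> C by field; exact: neq0Ci.
by rewrite scale1r.
Qed.


Lemma pf_zw (f g : Z) : pf (zz f g) (ww f g) = f.
Proof. by apply: funext => k; rewrite /pf -f_zw. Qed.
Lemma pg_zw (f g : Z) : pg (zz f g) (ww f g) = g.
Proof. by apply: funext => k; rewrite /pg -g_zw. Qed.

Lemma ip_fin1 (z1 w1 f2 g2 : Z) K : (forall k, (K < `|k|)%N -> z1 k = 0 /\ w1 k = 0) ->
  ip (pg z1 w1) f2 - ip (pf z1 w1) g2 =
  2 * 'i * zpsum (fun k => vdot (z1 k) (zz f2 g2 k) - vdot (w1 k) (ww f2 g2 k)) K.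
Proof.
move=> h.
rewrite (@ip_fin _ _ (pg z1 w1) f2 K); last first.
  by move=> k hk; rewrite /pg; have [-> ->] := h k hk; rewrite addr0 scaler0 vdot0l.
rewrite (@ip_fin _ _ (pf z1 w1) g2 K); last first.
  by move=> k hk; rewrite /pf; have [-> ->] := h k hk; rewrite subr0 vdot0l.
rewrite -zpsumB (zpsum_eq _ (vdot_pair (pf z1 w1) (pg z1 w1) f2 g2)).
by rewrite zpsum_mulC zz_pfpg ww_pfpg.
Qed.

Lemma ip_fin2 (z1 w1 f2 g2 : Z) K : (forall k, (K < `|k|)%N -> z1 k = 0 /\ w1 k = 0) ->
  ip g2 (pf z1 w1) - ip f2 (pg z1 w1) =
  2 * 'i * zpsum (fun k => vdot (zz f2 g2 k) (z1 k) - vdot (ww f2 g2 k) (w1 k)) K.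
Proof.
move=> h.
rewrite (@ip_fin _ _ g2 (pf z1 w1) K); last first.
  by move=> k hk; rewrite /pf; have [-> ->] := h k hk; rewrite subr0 vdot0r.
rewrite (@ip_fin _ _ f2 (pg z1 w1) K); last first.
  by move=> k hk; rewrite /pg; have [-> ->] := h k hk; rewrite addr0 scaler0 vdot0r.
rewrite -zpsumB (zpsum_eq _ (vdot_pair f2 g2 (pf z1 w1) (pg z1 w1))).
by rewrite zpsum_mulC zz_pfpg ww_pfpg.
Qed.

Lemma zpsum_dl_l (a b : int) (c d : V) (y y' : Z) K : (`|a| <= K)%N -> (`|b| <= K)%N ->
  zpsum (fun k => vdot (dl a c k) (y k) - vdot (dl b d k) (y' k)) K =
  vdot c (y a) - vdot d (y' b).
Proof.
move=> ha hb; rewrite zpsumB.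
rewrite (@zpsum_eq _ _ (fun k => if k == a then vdot c (y a) else 0)); last first.
  by move=> k; rewrite /dl; case: eqP => [->|_]; rewrite ?vdot0l.
rewrite (@zpsum_eq _ (fun k => vdot (dl b d k) (y' k)) (fun k => if k == b then vdot d (y' b) else 0)); last first.
  by move=> k; rewrite /dl; case: eqP => [->|_]; rewrite ?vdot0l.
by rewrite !zpsum_delta.
Qed.

Lemma zpsum_dl_r (a b : int) (c d : V) (y y' : Z) K : (`|a| <= K)%N -> (`|b| <= K)%N ->
  zpsum (fun k => vdot (y k) (dl a c k) - vdot (y' k) (dl b d k)) K =
  vdot (y a) c - vdot (y' b) d.
Proof.
move=> ha hb; rewrite zpsumB.
rewrite (@zpsum_eq _ _ (fun k => if k == a then vdot (y a) c else 0)); last first.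
  by move=> k; rewrite /dl; case: eqP => [->|_]; rewrite ?vdot0r.
rewrite (@zpsum_eq _ (fun k => vdot (y' k) (dl b d k)) (fun k => if k == b then vdot (y' b) d else 0)); last first.
  by move=> k; rewrite /dl; case: eqP => [->|_]; rewrite ?vdot0r.
by rewrite !zpsum_delta.
Qed.

Lemma vdot_eq0 (u : V) : vdot u u = 0 -> u = 0.
Proof.
rewrite vdot_self => h.
have h0 : vsqn u = 0 by move: h => /(congr1 (@complex.Re R)).
apply/matrixP => i j; rewrite (ord1 j) mxE.
have := h0; rewrite /vsqn => /eqP; rewrite psumr_eq0; last by move=> k _; exact: (nsq_ge0 (u k 0)).
move=> /allP /(_ i (mem_index_enum _)) /implyP /(_ isT) /eqP.
case: (u i 0) => a b /= hab; apply: C_ext => /=.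
  by apply/eqP; rewrite -sqrf_eq0; apply/eqP; nra.
by apply/eqP; rewrite -sqrf_eq0; apply/eqP; nra.
Qed.

Lemma vdot_nondegr (u v : V) : (forall c, vdot c u = vdot c v) -> u = v.
Proof.
move=> h; apply/eqP; rewrite -subr_eq0; apply/eqP; apply: vdot_eq0.
by rewrite vdotBr h subrr.
Qed.

Lemma vdot_nondegl (u v : V) : (forall c, vdot u c = vdot v c) -> u = v.
Proof.
move=> h; apply/eqP; rewrite -subr_eq0; apply/eqP; apply: vdot_eq0.
by rewrite vdotBl h subrr.
Qed.

Lemma mul2i_eq0 (x : C) : 2 * 'i * x = 0 -> x = 0.
Proof. by move/eqP; rewrite mulf_eq0 (negbTE (@two_i_neq0 R)) => /eqP. Qed.

Lemma rel_of_test (u h : Z) :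
  (forall (j : int) (c : V), j != 0 ->
     ip (pg (dl (j + 1) c) (dl j c)) u - ip (pf (dl (j + 1) c) (dl j c)) h = 0) ->
  rel u h.
Proof.
move=> H k hk; apply: vdot_nondegr => c; apply/eqP; rewrite eq_sym -subr_eq0; apply/eqP.
have := H k c hk; rewrite (@ip_fin1 _ _ _ _ (`|k|.+1)); last first.
  by move=> x hx; rewrite /dl; split; case: eqP => // ?; subst x; lia.
by move/mul2i_eq0; rewrite zpsum_dl_l //; lia.
Qed.

Lemma dl_shift (j : int) (c : V) : (fun k => dl j c (k - 1)) = dl (j + 1) c.
Proof.
apply: funext => k; rewrite /dl.
have -> : (k - 1 == j) = (k == j + 1) by apply/eqP/eqP => ?; lia.
by [].
Qed.

Lemma S_test (j : int) (c : V) : j != 0 ->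
  S_graph (pf (dl (j + 1) c) (dl j c)) (pg (dl (j + 1) c) (dl j c)).
Proof.
move=> hj; exists (dl j c); split; last split; last split.
- apply: (@l2_fin _ _ _ `|j|) => k hk; rewrite /dl; case: eqP => // ?; subst k; lia.
- by rewrite /dl eq_sym (negbTE hj).
- by rewrite -dl_shift.
- by rewrite -dl_shift.
Qed.

Definition ee (a b : V) : Z := pf (dl 1 b) (dl 0 a).
Definition eg (a b : V) : Z := pg (dl 1 b) (dl 0 a).

Lemma ee_supp (a b : V) k : (1 < `|k|)%N -> dl 1 b k = 0 /\ dl 0 a k = 0.
Proof. by move=> hk; rewrite /dl; split; case: eqP => // ?; subst k. Qed.

Lemma l2_ee (a b : V) : l2 (ee a b) /\ l2 (eg a b).
Proof.
split; apply: (@l2_fin _ _ _ 1) => k hk.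
  by rewrite /ee /pf; have [-> ->] := ee_supp a b hk; rewrite subr0.
by rewrite /eg /pg; have [-> ->] := ee_supp a b hk; rewrite addr0 scaler0.
Qed.

Lemma rel_ee (a b : V) : rel (ee a b) (eg a b).
Proof.
move=> k hk; rewrite /ee /eg zz_pfpg ww_pfpg /dl (negbTE hk).
by case: eqP => // /eqP; rewrite -subr_eq0 addrK (negbTE hk).
Qed.

Lemma zz_ee1 (a b : V) : zz (ee a b) (eg a b) 1 = b.
Proof. by rewrite zz_pfpg. Qed.
Lemma ww_ee0 (a b : V) : ww (ee a b) (eg a b) 0 = a.
Proof. by rewrite ww_pfpg. Qed.

Lemma ip_ee (u h : Z) (a b : V) :
  ip h (ee a b) - ip u (eg a b) =
  2 * 'i * (vdot (zz u h 1) b - vdot (ww u h 0) a).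
Proof.
rewrite (@ip_fin2 _ _ _ _ 1); last by move=> k hk; exact: ee_supp.
by rewrite zpsum_dl_r.
Qed.

End P6.

Section P8.
Variables (R : realType) (n : nat).
Local Notation C := (R[i]).
Local Notation V := ('cV[C]_n).

Lemma mul_cV1 (q : V) (d : 'M[C]_1) : q *m d = d 0 0 *: q.
Proof. by apply/matrixP => i j; rewrite (ord1 j) !mxE big_ord1 mulrC. Qed.

Lemma vdot_mul_ker (k : nat) (A : 'M[C]_(n, k)) (u : 'rV[C]_n) (x : 'cV[C]_k) :
  u *m A = 0 -> vdot (A *m x) (map_mx conjc u)^T = 0.
Proof.
move=> hu; rewrite (@vdot_mx R n).
have -> : (map_mx conjc (map_mx conjc u)^T)^T = u.
  by apply/matrixP => i j; rewrite !mxE conjcK.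
by rewrite mulmxA hu mul0mx mxE.
Qed.

Lemma sub_colmx_l (m1 m2 p : nat) (A : 'M[C]_(m1, p)) (B : 'M[C]_(m2, p)) :
  (A <= col_mx A B)%MS.
Proof.
have e : A = row_mx 1%:M 0 *m col_mx A B by rewrite mul_row_col mul1mx mul0mx addr0.
rewrite {1}e; exact: submxMl.
Qed.

Lemma FD (Q : V -> Prop) :
  Q 0 -> (forall k b b', Q b -> Q b' -> Q (k *: b + b')) ->
  (forall c, (forall b, Q b -> vdot b c = 0) -> c = 0) ->
  forall b, Q b.
Proof.
move=> Q0 Qlin Qperp.
have step : forall r, (r <= n)%N -> exists k (A : 'M[C]_(n, k)),
    (forall y, Q (A *m y)) /\ (r <= \rank A)%N.
  elim=> [|r IH] hr.
    by exists 0%N, 0; split => // y; rewrite mul0mx.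
  have [k [A [hA hr']]] := IH (ltnW hr).
  case: (ltnP r (\rank A)) => hlt; first by exists k, A.
  have hAr : \rank A = r by apply/eqP; rewrite eqn_leq hlt hr'.
  have : kermx A != 0.
    by rewrite -mxrank_eq0 mxrank_ker subn_eq0 -ltnNge hAr.
  move=> /rowV0Pn [u hu unz]; rewrite sub_kermx in hu; move/eqP: hu => hu.
  set c := (map_mx conjc u)^T.
  have cnz : c != 0.
    apply: contra unz => /eqP c0; apply/eqP/matrixP => i j.
    have := congr1 (fun M : 'M[C]_(n, 1) => M j i) c0; rewrite !mxE => /(congr1 conjc).
    by rewrite conjcK => ->; rewrite (rmorph0 conjc).
  have [q [Qq hq]] : exists q, Q q /\ vdot q c <> 0.
    apply: NNPP => hno; move/eqP: cnz; apply; apply: Qperp => b Qb.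
    apply: NNPP => h; apply: hno; by exists b.
  exists (k + 1)%N, (row_mx A q); split.
    move=> y; rewrite -[y]vsubmxK mul_row_col mul_cV1 addrC; exact: Qlin.
  have hsub : (A^T <= (row_mx A q)^T)%MS by rewrite tr_row_mx; exact: sub_colmx_l.
  have := mxrank_leqif_sup hsub; rewrite !mxrank_tr => -[hle heq].
  case: (ltnP r (\rank (row_mx A q))) => // hge.
  exfalso; apply: hq.
  have : ((row_mx A q)^T <= A^T)%MS by rewrite -heq hAr eqn_leq hge -hAr hle.
  rewrite tr_row_mx col_mx_sub => /andP[_ /submxP [x hx]].
  have -> : q = A *m x^T by rewrite -[q]trmxK hx trmx_mul trmxK.
  exact: vdot_mul_ker.
have [k [A [hA hn]]] := step n (leqnn n).
move=> b.
have hfull : row_full A^T.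
  by rewrite /row_full mxrank_tr eqn_leq rank_leq_row hn.
have /submxP [x hx] : (b^T <= A^T)%MS by exact: submx_full.
have -> : b = A *m x^T by rewrite -[b]trmxK hx trmx_mul trmxK.
exact: hA.
Qed.


Lemma col_decomp (b : V) : b = \sum_(j < n) b j 0 *: delta_mx j 0.
Proof.
rewrite {1}(matrix_sum_delta b); apply: eq_bigr => j _.
by rewrite big_ord1.
Qed.

Lemma LA (Jm Jp : 'M[C]_n) (P : V -> V -> Prop) :
  P 0 0 ->
  (forall k a b a' b', P a b -> P a' b' -> P (k *: a + a') (k *: b + b')) ->
  (forall a b a' b', P a b -> P a' b' -> vdot b' b = vdot a' a) ->
  (forall c d, (forall a b, P a b -> vdot b c = vdot a d) -> P d c) ->
  (forall a b, P a b -> P (Jm *m a) (Jp *m b)) ->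
  \rank (1%:M - Jp) = \rank (1%:M - Jm).
Proof.
move=> P0 Plin Piso Pmax Pinv.
have Q : forall b, exists a, P a b.
  apply: FD.
  - by exists 0.
  - move=> k b b' [a Pa] [a' Pa']; exists (k *: a + a'); exact: Plin.
  - move=> c hc.
    have P0c : P 0 c.
      apply: Pmax => a b Pab; rewrite vdot0r; apply: hc; by exists a.
    by apply: vdot_eq0; rewrite (Piso _ _ _ _ P0c P0c) vdot0l.
have uniq : forall a a' b, P a b -> P a' b -> a = a'.
  move=> a a' b Pa Pa'.
  have := Plin (-1) _ _ _ _ Pa' Pa; rewrite !scaleN1r addNr [- a' + a]addrC => P1.
  apply/eqP; rewrite -subr_eq0; apply/eqP; apply: vdot_eq0.
  by rewrite -(Piso _ _ _ _ P1 P1) vdot0l.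
pose aa (j : 'I_n) := proj1_sig (cid (Q (delta_mx j 0))).
have Paa j : P (aa j) (delta_mx j 0) := proj2_sig (cid (Q (delta_mx j 0))).
pose Vm : 'M[C]_n := \matrix_(i, j) aa j i 0.
have PV : forall b, P (Vm *m b) b.
  move=> b.
  have eV : Vm *m b = \sum_(j < n) b j 0 *: aa j.
    rewrite {1}(col_decomp b) mulmx_sumr; apply: eq_bigr => j _.
    rewrite -scalemxAr -colE; congr (_ *: _).
    by apply/matrixP => i k; rewrite (ord1 k) !mxE.
  rewrite eV {2}(col_decomp b).
  apply: (big_ind2 (fun x y => P x y)) => //.
    by move=> x1 x2 y1 y2 h1 h2; have := Plin 1 _ _ _ _ h1 h2; rewrite !scale1r.
  by move=> j _; have := Plin (b j 0) _ _ _ _ (Paa j) P0; rewrite !addr0.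
have VJ : Jm *m Vm = Vm *m Jp.
  apply/matrixP => i j.
  have h := uniq _ _ _ (Pinv _ _ (PV (delta_mx j 0))) (PV (Jp *m delta_mx j 0)).
  rewrite !mulmxA -!colE in h.
  by have := congr1 (fun M : 'M[C]_(n, 1) => M i 0) h; rewrite !mxE.
have Vu : Vm \in unitmx.
  rewrite -unitmx_tr -row_free_unit -kermx_eq0; apply/negPn/negP => /rowV0Pn [v hv vnz].
  rewrite sub_kermx in hv; move/eqP: hv => hv.
  have hv' : Vm *m v^T = 0 by rewrite -[Vm]trmxK -trmx_mul hv trmx0.
  have := PV v^T; rewrite hv' => P0v.
  have v0 : v^T = 0 by apply: vdot_eq0; rewrite (Piso _ _ _ _ P0v P0v) vdot0l.
  by move/eqP: vnz; apply; rewrite -[v]trmxK v0 trmx0.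
have e : (1%:M - Jm) *m Vm = Vm *m (1%:M - Jp).
  by rewrite mulmxBl mulmxBr mul1mx mulmx1 VJ.
have fV : row_free Vm by rewrite row_free_unit.
have fVt : row_free Vm^T by rewrite row_free_unit unitmx_tr.
have h1 : \rank (1%:M - Jm) = \rank (Vm *m (1%:M - Jp)) by rewrite -e mxrankMfree.
have h2 : \rank (Vm *m (1%:M - Jp)) = \rank (1%:M - Jp).
  by rewrite -mxrank_tr trmx_mul mxrankMfree // mxrank_tr.
by rewrite h1 h2.
Qed.

End P8.

Section P7.
Variables (R : realType) (n : nat).
Local Notation C := (R[i]).
Local Notation V := ('cV[C]_n).
Local Notation Z := (zseq R n).

Lemma Jop_ee (Jm Jp : 'M[C]_n) (a b : V) : Jop Jm Jp (ee a b) = ee (Jm *m a) (Jp *m b).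
Proof.
apply: funext => k; rewrite /Jop /ee /pf /dl.
have [->|k0] := eqVneq k 0; first by rewrite /= !sub0r mulmxN.
have [->|k1] := eqVneq k 1; first by rewrite /= !subr0.
by rewrite ?(negbTE k0) ?(negbTE k1) subr0 !mulmx0; case: ifP.
Qed.

Lemma Jop_eg (Jm Jp : 'M[C]_n) (a b : V) : Jop Jm Jp (eg a b) = eg (Jm *m a) (Jp *m b).
Proof.
apply: funext => k; rewrite /Jop /eg /pg /dl.
have [->|k0] := eqVneq k 0; first by rewrite /= !add0r scalemxAr.
have [->|k1] := eqVneq k 1; first by rewrite /= !addr0 scalemxAr.
by rewrite ?(negbTE k0) ?(negbTE k1) addr0 !scaler0 !mulmx0; case: ifP.
Qed.

Lemma forward (Jm Jp : 'M[C]_n) (B : op R n) :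
  selfadjoint B -> extends_S B -> J_commutes Jm Jp B ->
  \rank (1%:M - Jp) = \rank (1%:M - Jm).
Proof.
move=> [sa1 sa2] ext jc.
have adjB : forall u, dom B u -> forall f, dom B f -> ip (act B f) u = ip f (act B u).
  move=> u du f df; have [_ [_ H]] := (sa2 u (act B u)).2 (conj du erefl); exact: H.
have relB : forall u, dom B u -> rel u (act B u).
  move=> u du; apply: rel_of_test => j c hj.
  have [ds es] := ext _ _ (S_test c hj).
  by rewrite -es (adjB u du _ ds) subrr.
pose P (a b : V) := forall u, dom B u ->
  vdot (zz u (act B u) 1) b = vdot (ww u (act B u) 0) a.
have Piff : forall a b, P a b <-> dom B (ee a b) /\ act B (ee a b) = eg a b.
  move=> a b; split.
  - move=> Pab; apply/sa2; split; first exact: (l2_ee a b).1.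
    split; first exact: (l2_ee a b).2.
    by move=> u du; apply/eqP; rewrite -subr_eq0 ip_ee Pab // subrr mulr0.
  - move=> [de ae] u du.
    have := adjB _ de u du; rewrite ae => h.
    have := ip_ee u (act B u) a b; rewrite h subrr => /esym /mul2i_eq0 /eqP.
    by rewrite subr_eq0 => /eqP.
have PL : forall u, dom B u -> P (ww u (act B u) 0) (zz u (act B u) 1).
  move=> u du v dv.
  have [lv lBv] := sa1 v dv; have [lu lBu] := sa1 u du.
  have := ip_tele lv lBv lu lBu (relB v dv) (relB u du).
  rewrite (adjB u du v dv) subrr => /esym /mul2i_eq0 /eqP.
  by rewrite subr_eq0 => /eqP.
apply: (@LA R n Jm Jp P).
- by move=> u du; rewrite !vdot0r.
- by move=> k a b a' b' Pab Pab' u du; rewrite !vdotDr !vdotZr Pab // Pab'.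
- move=> a b a' b' Pab Pab'; have [de ae] := (Piff a' b').1 Pab'.
  by have := Pab _ de; rewrite ae zz_ee1 ww_ee0.
- by move=> c d H u du; apply: H; exact: PL.
- move=> a b Pab; apply/Piff; have [de ae] := (Piff a b).1 Pab.
  have [dJ aJ] := jc _ de; rewrite Jop_ee in dJ aJ; rewrite ae Jop_eg in aJ.
  by split => //; rewrite -aJ.
Qed.

End P7.

Section P9a.
Import GRing.Theory.
Local Open Scope sesquilinear_scope.
Variables (R : realType) (n : nat).
Local Notation C := (R[i]).

Lemma fund_adj (J : 'M[C]_n) : fund_sym J -> J ^t* = J.
Proof. by move=> [h _]; rewrite -map_trmx. Qed.

Lemma adj_mul (p q r : nat) (A : 'M[C]_(p, q)) (B : 'M[C]_(q, r)) :
  (A *m B) ^t* = B ^t* *m A ^t*.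
Proof. by rewrite trmx_mul map_mxM. Qed.

Lemma adjK (p q : nat) (A : 'M[C]_(p, q)) : A ^t* ^t* = A.
Proof. by apply/matrixP => i j; rewrite !mxE conjCK. Qed.

Lemma XJ (J : 'M[C]_n) : fund_sym J ->
  exists (r s : nat) (X : 'M[C]_(r + s, n)),
    [/\ r = \rank (1%:M - J)%R, s = (n - \rank (1%:M - J)%R)%N,
        X *m X ^t* = 1%:M & X *m J = block_mx (-1%:M) 0 0 1%:M *m X].
Proof.
move=> hJ; have JJ := hJ.2; have Ja := fund_adj hJ.
exists _, _, (schmidt_complete (1%:M - J)); split => //.
- exact: rank_ortho.
- by apply/unitarymxP; exact: schmidt_complete_unitarymx.
rewrite /schmidt_complete mul_col_mx mul_block_col !mul0mx addr0 add0r mul1mx mulNmx mul1mx.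
congr col_mx.
  have : (schmidt (row_base (1%:M - J)) <= 1%:M - J)%MS.
    by rewrite (eqmx_schmidt_free (row_base_free _)) eq_row_base.
  move=> /submxP [D ->].
  by rewrite -mulmxA mulmxBl mul1mx JJ -mulmxN opprB.
set A2 := schmidt _.
have : A2 *m (1%:M - J) ^t* = 0.
  apply/orthomx1P; rewrite /A2 (eqmx_schmidt_free (row_base_free _)) eq_row_base.
  exact: submx_refl.
have -> : (1%:M - J) ^t* = 1%:M - J by rewrite linearB /= trmx1 map_mxB map_mx1 Ja.
by rewrite mulmxBr mulmx1 => /eqP; rewrite subr_eq0 => /eqP.
Qed.

Lemma unit_sq (k : nat) (e : k = n) (W : 'M[C]_(k, n)) :
  W *m W ^t* = 1%:M -> W ^t* *m W = 1%:M.
Proof. by subst k; exact: mulmx1C. Qed.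

Lemma build_V (Jm Jp : 'M[C]_n) (r s r' s' : nat) (er : r = r') (es : s = s')
  (ers : (r + s)%N = n) (X : 'M[C]_(r + s, n)) (Y : 'M[C]_(r' + s', n)) :
  Jm ^t* = Jm -> Jp ^t* = Jp ->
  X *m X ^t* = 1%:M -> Y *m Y ^t* = 1%:M ->
  X *m Jm = block_mx (-1%:M) 0 0 1%:M *m X ->
  Y *m Jp = block_mx (-1%:M) 0 0 1%:M *m Y ->
  exists Vm : 'M[C]_n, [/\ Vm ^t* *m Vm = 1%:M, Vm *m Vm ^t* = 1%:M & Jm *m Vm = Vm *m Jp].
Proof.
subst r' s' => Jma Jpa uX uY iX iY.
set D := block_mx _ _ _ _ in iX iY.
have Da : D ^t* = D.
  rewrite /D tr_block_mx map_block_mx; congr block_mx; apply/matrixP => i j;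
  by rewrite !mxE ?rmorphN ?rmorphMn ?rmorph1 ?rmorph0 ?(eq_sym i j).
have uX' := unit_sq ers uX; have uY' := unit_sq ers uY.
have hX : Jm *m X ^t* = X ^t* *m D by rewrite -Jma -adj_mul iX adj_mul Da.
exists (X ^t* *m Y); split.
- by rewrite adj_mul adjK mulmxA -(mulmxA _ X) uX mulmx1 uY'.
- by rewrite adj_mul adjK -mulmxA (mulmxA Y) uY mul1mx uX'.
- by rewrite mulmxA hX -mulmxA -iY mulmxA.
Qed.
End P9a.

Section P9b.
Local Open Scope classical_set_scope.
Local Open Scope sesquilinear_scope.
Local Open Scope ring_scope.
Variables (R : realType) (n : nat).
Local Notation C := (R[i]).
Local Notation V := ('cV[C]_n).
Local Notation Z := (zseq R n).

Lemma zh (T : zmodType) (a b c d : T) : a - b = c - d -> b - d = a - c.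
Proof. by move=> h; rewrite -[a](subrK b) h addrAC [c - d]addrC addrK addrC. Qed.

Lemma vdot_t (x y : V) : vdot x y = (y ^t* *m x) 0 0.
Proof. by rewrite vdot_mx map_trmx. Qed.

Lemma vdot_adj (A : 'M[C]_n) (u v : V) : vdot (A *m u) v = vdot u (A ^t* *m v).
Proof. by rewrite !vdot_t adj_mul adjK mulmxA. Qed.

Lemma l2_const_pos (x : Z) : l2 x -> (forall m : nat, x (m.+2)%:Z = x (m.+1)%:Z) ->
  forall m : nat, x (m.+1)%:Z = 0.
Proof.
move=> lx h.
have c : forall m : nat, x (m.+1)%:Z = x 1 by elim => // m IH; rewrite h IH.
have [M hM] := lx.
have [t1 _] := zpsum_tail (fun k => vsqn_ge0 (x k)) hM.
have t1' : (fun m : nat => vsqn (x (m.+1)%:Z)) @ \oo --> (0:R) := shift0 t1.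
have e : (fun m : nat => vsqn (x (m.+1)%:Z)) = fun _ => vsqn (x 1).
  by apply: funext => m; rewrite c.
rewrite e in t1'.
have L : lim ((fun _ : nat => vsqn (x 1)) @ \oo) = (0:R) by apply: cvg_lim.
rewrite lim_cst // in L.
move=> m; rewrite c; apply: vdot_eq0; by rewrite vdot_self L.
Qed.

Lemma l2_const_neg (x : Z) : l2 x -> (forall m : nat, x (- (m.+1)%:Z) = x (- m%:Z)) ->
  forall m : nat, x (- m%:Z) = 0.
Proof.
move=> lx h.
have c : forall m : nat, x (- m%:Z) = x 0 by elim => // m IH; rewrite h IH.
have [M hM] := lx.
have [_ t2] := zpsum_tail (fun k => vsqn_ge0 (x k)) hM.
have e : (fun m : nat => vsqn (x (- m%:Z))) = fun _ => vsqn (x 0).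
  by apply: funext => m; rewrite c.
rewrite e in t2.
have L : lim ((fun _ : nat => vsqn (x 0)) @ \oo) = (0:R) by apply: cvg_lim.
rewrite lim_cst // in L.
move=> m; rewrite c; apply: vdot_eq0; by rewrite vdot_self L.
Qed.

Definition graphB (Vm : 'M[C]_n) (f g : Z) : Prop :=
  [/\ l2 f, l2 g, rel f g & ww f g 0 = Vm *m zz f g 1].

Lemma zero_seq (zt : Z) : l2 zt -> (forall k : int, k != 0 -> zt k = zt (k + 1)) ->
  forall k, zt k = 0.
Proof.
move=> lt rt.
have p0 : forall m : nat, zt (m.+1)%:Z = 0.
  apply: l2_const_pos => // m; rewrite (rt (m.+1)%:Z) //.
  by congr zt; lia.
have n0 : forall m : nat, zt (- m%:Z) = 0.
  apply: l2_const_neg => // m; rewrite rt; last by rewrite oppr_eq0.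
  by congr zt; lia.
case=> m; first by case: m => [|m]; [exact: (n0 0%N) | exact: p0].
by rewrite NegzE; exact: n0.
Qed.

Lemma graphB_uniq Vm f g g' : graphB Vm f g -> graphB Vm f g' -> g = g'.
Proof.
move=> [lf lg r e] [_ lg' r' e'].
have zw : forall k, ww f g k - ww f g' k = zz f g k - zz f g' k.
  move=> k; apply: zh; by rewrite -(f_zw f g) -(f_zw f g').
have z0 := @zero_seq (fun k => zz f g k - zz f g' k).
have z0' : forall k, zz f g k - zz f g' k = 0.
  apply: z0.
    have -> : (fun k => zz f g k - zz f g' k) = fun k => 1 *: zz f g k + (-1) *: zz f g' k.
      by apply: funext => k; rewrite scale1r scaleN1r.
    by apply: l2_lin; apply: l2_zz.
  by move=> k hk; rewrite -(zw k) (r k hk) (r' k hk).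
have ez : zz f g = zz f g' by apply: funext => k; apply/eqP; rewrite -subr_eq0; apply/eqP; exact: z0'.
have ew : ww f g = ww f g' by apply: funext => k; apply/eqP; rewrite -subr_eq0 zw; apply/eqP; exact: z0'.
by rewrite -(pg_zw f g) -(pg_zw f g') ez ew.
Qed.

Definition Bop (Vm : 'M[C]_n) : op R n :=
  Op (fun f => exists g, graphB Vm f g)
     (fun f => epsilon (inhabits (fun _ : int => (0 : V))) (graphB Vm f)).

Lemma Bgraph_iff Vm f g : (dom (Bop Vm) f /\ act (Bop Vm) f = g) <-> graphB Vm f g.
Proof.
split.
  by move=> [d <-]; exact: (epsilon_spec _ _ d).
move=> h; split; first by exists g.
by apply: (graphB_uniq (epsilon_spec _ _ (ex_intro _ g h)) h).
Qed.

Lemma Bact Vm f : dom (Bop Vm) f -> graphB Vm f (act (Bop Vm) f).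
Proof. by move=> d; apply/Bgraph_iff. Qed.

End P9b.

Section P9d.
Local Open Scope classical_set_scope.
Local Open Scope sesquilinear_scope.
Local Open Scope ring_scope.
Variables (R : realType) (n : nat).
Local Notation C := (R[i]).
Local Notation V := ('cV[C]_n).
Local Notation Z := (zseq R n).

Lemma l2_shift (x : Z) : l2 x -> l2 (fun k => x (k - 1)).
Proof.
move=> [M hM]; exists M => m; apply: le_trans (hM m.+1).
rewrite /zpsum.
have -> : \sum_(j < (2 * m).+1) vsqn (x (j%:Z - m%:Z - 1)) =
          \sum_(j < (2 * m).+1) vsqn (x (j%:Z - m.+1%:Z)).
  by apply: eq_bigr => j _; congr (vsqn (x _)); lia.
have hle : ((2 * m).+1 <= (2 * m.+1).+1)%N by lia.
rewrite (big_ord_widen _ (fun j : nat => vsqn (x (j%:Z - m.+1%:Z))) hle).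
rewrite big_mkcond; apply: ler_sum => i _; case: ifP => _ //.
exact: vsqn_ge0.
Qed.

Lemma vsqn_J (J : 'M[C]_n) (u : V) : fund_sym J -> vsqn (J *m u) = vsqn u.
Proof.
move=> hJ.
have : vdot (J *m u) (J *m u) = vdot u u.
  by rewrite vdot_adj mulmxA (fund_adj hJ) hJ.2 mul1mx.
by rewrite !vdot_self => /(congr1 (@complex.Re R)).
Qed.

Definition Jk (Jm Jp : 'M[C]_n) (k : int) := if k <= 0 then Jm else Jp.

Lemma JopE (Jm Jp : 'M[C]_n) (x : Z) k : Jop Jm Jp x k = Jk Jm Jp k *m x k.
Proof. by rewrite /Jop /Jk; case: ifP. Qed.

Lemma l2_J (Jm Jp : 'M[C]_n) (x : Z) : fund_sym Jm -> fund_sym Jp -> l2 x -> l2 (Jop Jm Jp x).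
Proof.
move=> hm hp [M hM]; exists M => m; apply: le_trans (hM m); rewrite le_eqVlt; apply/orP; left.
apply/eqP; apply: zpsum_eq => k; rewrite JopE /Jk; case: ifP => _; exact: vsqn_J.
Qed.

Lemma zz_J (Jm Jp : 'M[C]_n) (f g : Z) k :
  zz (Jop Jm Jp f) (Jop Jm Jp g) k = Jk Jm Jp k *m zz f g k.
Proof. by rewrite /zz !JopE -scalemxAr mulmxDr scalemxAr. Qed.
Lemma ww_J (Jm Jp : 'M[C]_n) (f g : Z) k :
  ww (Jop Jm Jp f) (Jop Jm Jp g) k = Jk Jm Jp k *m ww f g k.
Proof. by rewrite /ww !JopE -scalemxAr mulmxBr scalemxAr. Qed.

Lemma Jk0 (Jm Jp : 'M[C]_n) : Jk Jm Jp 0 = Jm.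
Proof. by rewrite /Jk lexx. Qed.
Lemma Jk1 (Jm Jp : 'M[C]_n) : Jk Jm Jp 1 = Jp.
Proof. by rewrite /Jk ler10. Qed.
Lemma Jk_step (Jm Jp : 'M[C]_n) (k : int) : k != 0 -> Jk Jm Jp (k + 1) = Jk Jm Jp k.
Proof.
move=> /eqP hk; rewrite /Jk.
have -> : (k + 1 <= 0) = (k <= 0) by apply/idP/idP => ?; lia.
by [].
Qed.

Lemma graphB_J (Jm Jp Vm : 'M[C]_n) f g : fund_sym Jm -> fund_sym Jp ->
  Jm *m Vm = Vm *m Jp -> graphB Vm f g -> graphB Vm (Jop Jm Jp f) (Jop Jm Jp g).
Proof.
move=> hm hp hJ [lf lg r e]; split.
- exact: l2_J.
- exact: l2_J.
- move=> k hk; rewrite zz_J ww_J (r k hk); congr (_ *m _).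
  exact: (esym (Jk_step Jm Jp hk)).
- by rewrite zz_J ww_J e (Jk0 Jm Jp) (Jk1 Jm Jp) mulmxA hJ -mulmxA.
Qed.


Lemma S_in_B (Vm : 'M[C]_n) f g : S_graph f g -> graphB Vm f g.
Proof.
move=> [x [lx [x0 [-> ->]]]].
have ez : zz (fun k => x (k - 1) - x k) (fun k => Complex 0 1 *: (x (k - 1) + x k)) =
          fun k => x (k - 1) := zz_pfpg (fun k => x (k - 1)) x.
have ew : ww (fun k => x (k - 1) - x k) (fun k => Complex 0 1 *: (x (k - 1) + x k)) =
          x := ww_pfpg (fun k => x (k - 1)) x.
split.
- have -> : (fun k => x (k - 1) - x k) = fun k => 1 *: x (k - 1) + (-1) *: x k.
    by apply: funext => k; rewrite scale1r scaleN1r.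
  by apply: l2_lin => //; apply: l2_shift.
- have -> : (fun k => Complex 0 1 *: (x (k - 1) + x k)) =
            fun k => 'i *: x (k - 1) + 'i *: x k.
    by apply: funext => k; rewrite scalerDr.
  by apply: l2_lin => //; apply: l2_shift.
- by move=> k _; rewrite ez ew addrK.
- by rewrite ez ew /= subrr x0 mulmx0.
Qed.

Lemma adj_B (Vm : 'M[C]_n) g h : Vm ^t* *m Vm = 1%:M ->
  graphB Vm g h -> adj_graph (Bop Vm) g h.
Proof.
move=> hV [lg lh rg eg]; split => //; split => // f df.
have [lf lBf rf ef] := Bact df.
have := ip_tele lf lBf lg lh rf rg.
rewrite ef eg vdot_adj mulmxA hV mul1mx subrr mulr0.
by move/eqP; rewrite subr_eq0 => /eqP.
Qed.

Lemma adj_B' (Vm : 'M[C]_n) g h : Vm *m Vm ^t* = 1%:M ->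
  adj_graph (Bop Vm) g h -> graphB Vm g h.
Proof.
move=> hV [lg [lh H]]; split => //.
- apply: rel_of_test => j c hj.
  have [ds es] := (Bgraph_iff Vm _ _).2 (S_in_B Vm (S_test c hj)).
  by have := H _ ds; rewrite es => ->; rewrite subrr.
- have key : forall b : V, vdot b (zz g h 1) = vdot (Vm *m b) (ww g h 0).
    move=> b.
    have gB : graphB Vm (ee (Vm *m b) b) (eg (Vm *m b) b).
      have [l1 l2'] := l2_ee (Vm *m b) b.
      by split => //; [exact: rel_ee | rewrite ww_ee0 zz_ee1].
    have [de ae] := (Bgraph_iff Vm _ _).2 gB.
    have := H _ de; rewrite ae => hh.
    have := @ip_fin1 R n (dl 1 b) (dl 0 (Vm *m b)) g h 1 (fun k hk => ee_supp _ _ hk).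
    rewrite -/(ee _ _) -/(eg _ _) hh subrr zpsum_dl_l // => /esym /mul2i_eq0 /eqP.
    by rewrite subr_eq0 => /eqP.
  have : zz g h 1 = Vm ^t* *m ww g h 0.
    by apply: vdot_nondegr => b; rewrite key vdot_adj.
  by move=> ->; rewrite mulmxA hV mul1mx.
Qed.

Lemma backward (Jm Jp : 'M[C]_n) : fund_sym Jm -> fund_sym Jp ->
  \rank (1%:M - Jp)%R = \rank (1%:M - Jm)%R ->
  exists B : op R n, selfadjoint B /\ extends_S B /\ J_commutes Jm Jp B.
Proof.
move=> hm hp hr.
have [rm [sm [Xm [erm esm uXm iXm]]]] := XJ hm.
have [rp [sp [Xp [erp esp uXp iXp]]]] := XJ hp.
have [Vm [hV1 hV2 hJ]] : exists Vm : 'M[C]_n,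
    [/\ Vm ^t* *m Vm = 1%:M, Vm *m Vm ^t* = 1%:M & Jm *m Vm = Vm *m Jp].
  apply: (@build_V R n Jm Jp rm sm rp sp _ _ _ Xm Xp) => //.
  - by rewrite erm erp hr.
  - by rewrite esm esp hr.
  - by rewrite erm esm subnKC // rank_leq_col.
  - exact: fund_adj.
  - exact: fund_adj.
exists (Bop Vm); split; last split.
- split.
    by move=> f df; have [? ? _ _] := Bact df.
  move=> g h; split.
    by move=> ha; apply/Bgraph_iff; exact: adj_B'.
  by move/Bgraph_iff; exact: adj_B.
- by move=> f g hS; apply/Bgraph_iff; exact: S_in_B.
- move=> u du; have gu := Bact du.
  have [d a] := (Bgraph_iff Vm _ _).2 (graphB_J hm hp hJ gu).
  by split => //; rewrite a.
Qed.

End P9d.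

Theorem corollary3p5 (R : realType) (n : nat) (Jm Jp : 'M[complex R]_n) :
  fund_sym Jm -> fund_sym Jp -> J_commutes_S Jm Jp ->
  (exists B : op R n, selfadjoint B /\ extends_S B /\ J_commutes Jm Jp B) <->
  \rank (1%:M - Jp) = \rank (1%:M - Jm).
Proof.
move=> hm hp _; split.
  by move=> [B [sa [ext jc]]]; exact: (forward sa ext jc).
exact: backward.
Qed.
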